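(* There is an absolute constant $C>0$ such that the following holds. Let the mesh be uniform with width $h>0$, i.e. $x_{i+1/2}=x_{1/2}+ih$, and let $(\bar v_i)_{i\in\mathbb{Z}}$ be a bounded real sequence with $\sum_{i}|\bar v_{i+1}-\bar v_i|<\infty$. Let $v^\pm_{i+1/2}$ be the cell interface values of the second order ($k=2$) ENO reconstruction of $(\bar v_i)$. Then $$\sum_{i\in\mathbb{Z}}|\bar v_{i+1}-\bar v_i|^{3}\le C\,\Bigl(\sup_{i}|\bar v_i|\Bigr)\sum_{i\in\mathbb{Z}}(\bar v_{i+1}-\bar v_i)\bigl(v^+_{i+1/2}-v^-_{i+1/2}\bigr).$$ In particular $C$ is independent of $(\bar v_i)$ and of $h$.
   Context: Mesh: cells $I_i=[x_{i-1/2},x_{i+1/2})$. Given a real sequence $(\bar v_i)_{i\in\mathbb{Z}}$, the divided differences are $[\bar v_i]=\bar v_i$ and, for $i<j$, $[\bar v_i,\dots,\bar v_j]=\frac{[\bar v_{i+1},\dots,\bar v_j]-[\bar v_i,\dots,\bar v_{j-1}]}{x_{j+1/2}-x_{i-1/2}}$. The $k$th order ENO reconstruction: for each $i$, set $s_i^1=i$, and for $\ell=1,\dots,k-1$ set $s_i^{\ell+1}=s_i^\ell-1$ if $\bigl|[\bar v_{s_i^\ell-1},\dots,\bar v_{s_i^\ell+\ell-1}]\bigr|<\bigl|[\bar v_{s_i^\ell},\dots,\bar v_{s_i^\ell+\ell}]\bigr|$, and $s_i^{\ell+1}=s_i^\ell$ otherwise; put $s_i=s_i^k$. Then $p_i$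 is the unique polynomial of degree at most $k-1$ with $\frac{1}{|I_j|}\int_{I_j}p_i(x)\,dx=\bar v_j$ for $j=s_i,\dots,s_i+k-1$. Cell interface values: $v^-_{i+1/2}=p_i(x_{i+1/2})$, $v^+_{i+1/2}=p_{i+1}(x_{i+1/2})$. (For $k=2$: $s_i=i-1$ if $|\bar v_i-\bar v_{i-1}|<|\bar v_{i+1}-\bar v_i|$ and $s_i=i$ otherwise.) *)

(* Defs.v *)
From Stdlib Require Import Reals Lra ZArith.
Open Scope R_scope.

(* Uniform mesh: x_{i+1/2} = x_{1/2} + i h.  [xh x12 h i] = x_{i+1/2}. *)
Definition xh (x12 h : R) (i : Z) : R := x12 + IZR i * h.

Definition xmid (x12 h : R) (i : Z) : R := (xh x12 h (i - 1) + xh x12 h i) / 2.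

Definition eno2_s (v : Z -> R) (i : Z) : Z :=
  if Rlt_dec (Rabs (v i - v (i - 1)%Z)) (Rabs (v (i + 1)%Z - v i))
  then (i - 1)%Z else i.

(* p_i : the unique polynomial of degree <= 1 whose cell averages on
   I_{s_i}, I_{s_i+1} are v_{s_i}, v_{s_i+1}.  A degree <= 1 polynomial has
   cell average equal to its value at the cell midpoint, and the midpoints
   of consecutive cells are h apart, hence the explicit formula. *)
Definition eno2_p (x12 h : R) (v : Z -> R) (i : Z) (x : R) : R :=
  let s := eno2_s v i in
  v s + (v (s + 1)%Z - v s) * (x - xmid x12 h s) / h.

Definition vminus (x12 h : R) (v : Z -> R) (i : Z) : R :=
  eno2_p x12 h v i (xh x12 h i).
Definition vplus (x12 h : R) (v : Z -> R) (i : Z) : R :=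
  eno2_p x12 h v (i + 1)%Z (xh x12 h i).

Definition zpartial (a : Z -> R) (N : nat) : R :=
  sum_f_R0 (fun k => a (Z.of_nat k - Z.of_nat N)%Z) (2 * N).

Definition zsum (a : Z -> R) (l : R) : Prop := Un_cv (zpartial a) l.

(* Main.v *)
Require Import Defs.
From Stdlib Require Import Reals ZArith Lra Lia Psatz.
Open Scope R_scope.

Definition dd (v : Z -> R) i := v (i+1)%Z - v i.
Definition mm v i := if Rlt_dec (Rabs (dd v (i-1))) (Rabs (dd v i)) then dd v (i-1)%Z else dd v i.
Definition gg v i := dd v i * Rabs (dd v i).
Definition AA v i := /2 * dd v i * (dd v i - mm v (i+1)%Z).
Definition BB v i := /2 * dd v i * (dd v i - mm v i).
Definition TT v i := AA v i + BB v i.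

Lemma key_xy (x y : R) :
  let m := if Rlt_dec (Rabs x) (Rabs y) then x else y in
  Rabs (y * Rabs y - x * Rabs x) <= 4 * (/2 * x * (x - m) + /2 * y * (y - m)).
Proof.
  simpl. destruct (Rlt_dec (Rabs x) (Rabs y)) as [H|H];
  unfold Rabs in *; destruct (Rcase_abs x); destruct (Rcase_abs y);
  destruct (Rcase_abs (y * _ - x * _)); nra.
Qed.

Lemma half_nonneg (x m : R) : Rabs m <= Rabs x -> 0 <= /2 * x * (x - m).
Proof.
  intros H. unfold Rabs in *; destruct (Rcase_abs x); destruct (Rcase_abs m); nra.
Qed.

Lemma half_le (x m : R) : Rabs m <= Rabs x -> /2 * x * (x - m) <= x * x.
Proof.
  intros H. unfold Rabs in *; destruct (Rcase_abs x); destruct (Rcase_abs m); nra.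
Qed.

Lemma mm_le_r v i : Rabs (mm v i) <= Rabs (dd v i).
Proof. unfold mm; destruct Rlt_dec; lra. Qed.

Lemma mm_le_l v i : Rabs (mm v (i+1)%Z) <= Rabs (dd v i).
Proof. unfold mm; replace (i+1-1)%Z with i by ring; destruct Rlt_dec; lra. Qed.

Lemma AA_nn v i : 0 <= AA v i.
Proof. apply half_nonneg, mm_le_l. Qed.
Lemma BB_nn v i : 0 <= BB v i.
Proof. apply half_nonneg, mm_le_r. Qed.
Lemma TT_nn v i : 0 <= TT v i.
Proof. unfold TT; pose proof (AA_nn v i); pose proof (BB_nn v i); lra. Qed.
Lemma TT_le v i : TT v i <= 2 * (Rabs (dd v i))^2.
Proof.
  unfold TT, AA, BB. pose proof (half_le _ _ (mm_le_l v i)); pose proof (half_le _ _ (mm_le_r v i)).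
  replace (Rabs (dd v i) ^ 2) with (dd v i * dd v i). lra.
  simpl. rewrite Rmult_1_r, <- Rabs_mult. rewrite Rabs_right by nra. lra.
Qed.

Lemma key v i : Rabs (gg v (i+1)%Z - gg v i) <= 4 * (AA v i + BB v (i+1)%Z).
Proof.
  unfold gg, AA, BB. pose proof (key_xy (dd v i) (dd v (i+1))) as K. simpl in K.
  unfold mm. replace (i+1-1)%Z with i by ring.
  destruct Rlt_dec; lra.
Qed.

Lemma pval x12 h v j i : h <> 0 ->
  eno2_p x12 h v j (xh x12 h i) =
  v (eno2_s v j) + (v (eno2_s v j + 1)%Z - v (eno2_s v j)) * (IZR i - IZR (eno2_s v j) + /2).
Proof.
  intros Hh. unfold eno2_p, xmid, xh. rewrite minus_IZR. field. auto.
Qed.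

Lemma s_cases v j : (eno2_s v j = (j-1)%Z /\ mm v j = dd v (j-1)%Z) \/ (eno2_s v j = j /\ mm v j = dd v j).
Proof.
  unfold eno2_s, mm, dd. replace (j-1+1)%Z with j by ring.
  destruct Rlt_dec; auto.
Qed.

Lemma jump x12 h v i : h <> 0 ->
  (v (i+1)%Z - v i) * (vplus x12 h v i - vminus x12 h v i) = TT v i.
Proof.
  intros Hh. unfold vplus, vminus. rewrite !pval by auto.
  unfold TT, AA, BB.
  destruct (s_cases v i) as [[E1 E2]|[E1 E2]]; destruct (s_cases v (i+1)) as [[F1 F2]|[F1 F2]];
  rewrite E1, F1, E2, F2; unfold dd;
  repeat (rewrite ?minus_IZR, ?plus_IZR);
  try replace (i+1-1)%Z with i by ring; try replace (i-1+1)%Z with i by ring;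
  try replace (i+1-1+1)%Z with (i+1)%Z by ring; simpl; field.
Qed.

Lemma zpartial_S a n : zpartial a (S n) = zpartial a n + a (- Z.of_nat (S n))%Z + a (Z.of_nat (S n)).
Proof.
  unfold zpartial. replace (2 * S n)%nat with (S (S (2*n))) by lia.
  rewrite tech5. rewrite (decomp_sum _ (S (2*n))) by lia. simpl Init.Nat.pred.
  rewrite (sum_eq (fun i => a (Z.of_nat (S i) - Z.of_nat (S n))%Z) (fun k => a (Z.of_nat k - Z.of_nat n)%Z)).
  - replace (Z.of_nat 0 - Z.of_nat (S n))%Z with (- Z.of_nat (S n))%Z by lia.
    replace (Z.of_nat (S (S (2 * n))) - Z.of_nat (S n))%Z with (Z.of_nat (S n)) by lia. replace (n + (n + 0))%nat with (2*n)%nat by lia. lra.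
  - intros i _. f_equal. lia.
Qed.

Lemma zpartial_le a b n : (forall i, a i <= b i) -> zpartial a n <= zpartial b n.
Proof. intros H. unfold zpartial. apply sum_Rle. intros; apply H. Qed.

Lemma zpartial_scal c a n : zpartial (fun i => c * a i) n = c * zpartial a n.
Proof. unfold zpartial. induction (2*n)%nat; simpl; [lra|]. rewrite IHn0. lra. Qed.

Lemma zpartial_growing a : (forall i, 0 <= a i) -> Un_growing (zpartial a).
Proof. intros H n. rewrite zpartial_S. pose proof (H (- Z.of_nat (S n))%Z); pose proof (H (Z.of_nat (S n))). lra. Qed.

Lemma zsum_exists a c w l : 0 <= c -> (forall i, 0 <= a i) -> (forall i, a i <= c * w i) ->
  (forall i, 0 <= w i) -> zsum w l -> exists L, zsum a L.
Proof.
  intros Hc Ha Hb Hw Hl.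
  destruct (growing_cv (zpartial a)) as [L HL].
  - apply zpartial_growing; auto.
  - exists (c * l). intros x [n ->].
    eapply Rle_trans. apply (zpartial_le a (fun i => c * w i)); auto.
    rewrite zpartial_scal.
    apply Rmult_le_compat_l; auto. apply growing_ineq; auto. apply zpartial_growing; auto.
  - exists L; exact HL.
Qed.

Lemma cube x : Rabs x ^ 3 = x * (x * Rabs x).
Proof.
  unfold Rabs; destruct (Rcase_abs x); simpl; ring.
Qed.

Lemma step_ineq v M j : (forall i, Rabs (v i) <= M) ->
  v (j+1)%Z * (gg v j - gg v (j+1)%Z) <= 4 * M * (AA v j + BB v (j+1)%Z).
Proof.
  intros HM. pose proof (key v j). pose proof (HM (j+1)%Z).
  pose proof (AA_nn v j); pose proof (BB_nn v (j+1)).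
  eapply Rle_trans. apply Rle_abs. rewrite Rabs_mult.
  replace (Rabs (gg v j - gg v (j + 1))) with (Rabs (gg v (j + 1) - gg v j)) by (rewrite <- Rabs_Ropp; f_equal; ring).
  assert (0 <= Rabs (gg v (j + 1) - gg v j)) by apply Rabs_pos.
  assert (0 <= Rabs (v (j+1)%Z)) by apply Rabs_pos.
  nra.
Qed.

Lemma inv v M lo n : (forall i, Rabs (v i) <= M) ->
 sum_f_R0 (fun k => Rabs (dd v (Z.of_nat k - lo)) ^ 3) n <=
 v (Z.of_nat n - lo + 1)%Z * gg v (Z.of_nat n - lo)%Z - v (-lo)%Z * gg v (-lo)%Z
 + 4*M*(sum_f_R0 (fun k => TT v (Z.of_nat k - lo)%Z) n - BB v (-lo)%Z - AA v (Z.of_nat n - lo)%Z).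
Proof.
  intros HM. induction n as [|n IH].
  - simpl sum_f_R0. replace (Z.of_nat 0 - lo)%Z with (-lo)%Z by lia. pose proof (cube (dd v (-lo))) as Hc; simpl in Hc; rewrite Hc. unfold TT, gg. set (a := Rabs _). unfold dd. right; ring.
  - rewrite !tech5.
    replace (Z.of_nat (S n) - lo)%Z with ((Z.of_nat n - lo) + 1)%Z by lia.
    set (j := (Z.of_nat n - lo)%Z) in *.
    pose proof (step_ineq v M j HM).
    set (S1 := sum_f_R0 (fun k => Rabs (dd v (Z.of_nat k - lo)) ^ 3) n) in *.
    set (S2 := sum_f_R0 (fun k => TT v (Z.of_nat k - lo)%Z) n) in *.
    rewrite cube. fold (gg v (j+1)%Z). unfold TT. unfold dd at 1. lra.
Qed.

Lemma wle v M i : (forall i, Rabs (v i) <= M) -> Rabs (dd v i) <= 2 * M.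
Proof.
  intros HM. unfold dd. pose proof (HM i); pose proof (HM (i+1)%Z).
  pose proof (Rabs_triang (v (i+1)%Z) (- v i)). rewrite Rabs_Ropp in H1. unfold Rminus. lra.
Qed.

Lemma bnd v M i j : (forall i, Rabs (v i) <= M) -> Rabs (v j * gg v i) <= 2 * M * M * Rabs (dd v i).
Proof.
  intros HM. pose proof (HM j). pose proof (wle v M i HM).
  unfold gg. rewrite !Rabs_mult, Rabs_Rabsolu.
  pose proof (Rabs_pos (v j)); pose proof (Rabs_pos (dd v i)).
  assert (Rabs (dd v i) * Rabs (dd v i) <= 2*M * Rabs (dd v i)) by nra.
  nra.
Qed.

Lemma fin v M N : (forall i, Rabs (v i) <= M) ->
  zpartial (fun i => Rabs (dd v i) ^ 3) N <=
  4 * M * zpartial (TT v) N + 2 * M * M * (Rabs (dd v (Z.of_nat N)) + Rabs (dd v (- Z.of_nat N)%Z)).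
Proof.
  intros HM. unfold zpartial. pose proof (inv v M (Z.of_nat N) (2*N) HM) as H.
  replace (Z.of_nat (2 * N) - Z.of_nat N)%Z with (Z.of_nat N) in H by lia.
  pose proof (bnd v M (Z.of_nat N) (Z.of_nat N + 1)%Z HM).
  pose proof (bnd v M (- Z.of_nat N)%Z (- Z.of_nat N)%Z HM).
  pose proof (AA_nn v (Z.of_nat N)); pose proof (BB_nn v (- Z.of_nat N)%Z).
  assert (0 <= M) by (pose proof (HM 0%Z); pose proof (Rabs_pos (v 0%Z)); lra).
  pose proof (Rle_abs (v (Z.of_nat N + 1)%Z * gg v (Z.of_nat N))).
  pose proof (Rle_abs (- (v (- Z.of_nat N)%Z * gg v (- Z.of_nat N)%Z))) as H7. rewrite Rabs_Ropp in H7.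
  nra.
Qed.

Lemma cv_const c : Un_cv (fun _ => c) c.
Proof. intros e He. exists 0%nat. intros. unfold R_dist. rewrite Rminus_diag, Rabs_R0. auto. Qed.

Lemma zsum_ext a b l : (forall i, a i = b i) -> zsum a l -> zsum b l.
Proof.
  intros E H e He. destruct (H e He) as [N HN]. exists N. intros n Hn.
  unfold zpartial. rewrite (sum_eq _ (fun k => a (Z.of_nat k - Z.of_nat n)%Z)).
  apply HN; auto. intros; symmetry; apply E.
Qed.

Lemma tail w l : (forall i, 0 <= w i) -> zsum w l ->
  Un_cv (fun n => w (Z.of_nat n) + w (- Z.of_nat n)%Z) 0.
Proof.
  intros Hw H e He. destruct (H (e/2)) as [N HN]. lra.
  exists (S N). intros n Hn. destruct n as [|k]. lia.
  pose proof (HN (S k) ltac:(lia)). pose proof (HN k ltac:(lia)).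
  rewrite zpartial_S in H0. unfold R_dist in *.
  pose proof (Hw (Z.of_nat (S k))); pose proof (Hw (- Z.of_nat (S k))%Z).
  rewrite Rminus_0_r. rewrite Rabs_right by lra.
  unfold Rabs in H0, H1; destruct Rcase_abs; destruct Rcase_abs; lra.
Qed.

Theorem mainTheorem3 :
  exists C : R, 0 < C /\
  forall (x12 h : R) (v : Z -> R),
    0 < h ->
    (exists B : R, forall i : Z, Rabs (v i) <= B) ->
    (exists l : R, zsum (fun i => Rabs (v (i + 1)%Z - v i)) l) ->
    forall M : R, is_lub (fun r => exists i : Z, r = Rabs (v i)) M ->
    exists L R0 : R,
      zsum (fun i => Rabs (v (i + 1)%Z - v i) ^ 3) L /\
      zsum (fun i => (v (i + 1)%Z - v i) *
                     (vplus x12 h v i - vminus x12 h v i)) R0 /\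
      L <= C * M * R0.
Proof.
  exists 4. split. lra.
  intros x12 h v Hh _ [l Hl] M [Hub _].
  assert (HM : forall i, Rabs (v i) <= M) by (intros i; apply Hub; exists i; auto).
  assert (M0 : 0 <= M) by (pose proof (HM 0%Z); pose proof (Rabs_pos (v 0%Z)); lra).
  change (zsum (fun i => Rabs (dd v i)) l) in Hl.
  assert (Hw : forall i, 0 <= Rabs (dd v i)) by (intros; apply Rabs_pos).
  destruct (zsum_exists (fun i => Rabs (dd v i) ^ 3) (4*M*M) (fun i => Rabs (dd v i)) l)
    as [L HL]; auto.
  { nra. }
  { intros; apply pow_le; auto. }
  { intros i. pose proof (wle v M i HM). pose proof (Hw i). simpl.
    assert (Rabs (dd v i) * Rabs (dd v i) <= 4*M*M) by nra. nra. }
  destruct (zsum_exists (TT v) (4*M) (fun i => Rabs (dd v i)) l) as [R0 HR]; auto.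
  { lra. }
  { apply TT_nn. }
  { intros i. pose proof (wle v M i HM). pose proof (Hw i). pose proof (TT_le v i). simpl in *. nra. }
  exists L, R0. split; [exact HL|]. split.
  { apply (zsum_ext (TT v)); auto. intros i. symmetry. apply jump. lra. }
  pose proof (tail _ _ Hw Hl) as Ht.
  replace (4 * M * R0) with (4 * M * R0 + 2 * M * M * 0) by ring.
  apply Rle_cv_lim with (Un := zpartial (fun i => Rabs (dd v i) ^ 3))
    (Vn := fun n => 4 * M * zpartial (TT v) n + 2 * M * M * (Rabs (dd v (Z.of_nat n)) + Rabs (dd v (- Z.of_nat n)%Z))).
  - intros n. apply fin; auto.
  - exact HL.
  - apply CV_plus; apply CV_mult; auto; apply cv_const.
Qed.
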